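(* Let $S\in\Delta^1_n$. Then $$\phi_S(z)=z^n+\sum_{j=1}^{\lfloor n/2\rfloor}(-1)^j c_{2j}(S)\,z^{n-2j},$$ where $c_{2j}(S)=|\pounds_{2j}|$ is the number of linear subsidigraphs of $S$ of order $2j$.
   Context: A sidigraph is a digraph (no loops, at most one arc from $u$ to $v$) with a sign $\sigma(a)\in\{-1,1\}$ on each arc $a$. Its adjacency matrix $A(S)=(a_{ij})$ has $a_{ij}=\sigma(v_i,v_j)$ if there is an arc from $v_i$ to $v_j$ and $0$ otherwise; $\phi_S(z)=\det(zI-A(S))$. The sign of a directed cycle is the product of the signs of its arcs; the cycle is positive or negative accordingly. A sidigraph is bipartite if its underlying digraph is bipartite. $\Delta^1_n$ is the class of bipartite sidigraphs on $n$ vertices in which every directed cycle of length $\equiv 0\pmod 4$ is negative and every directed cycle of length $\equiv 2\pmod 4$ is positive. A linear subsidigraph of order $k$ is a subsidigraph on $k$ vertices in which every vertex has indegree and outdegree $1$ (a vertex-disjoint union of directed cycles covering those $k$ vertices); $\pounds_k$ is the set of these. *)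

(* Defs.v *)
From HB Require Import structures.
From mathcomp Require Import all_boot all_order all_algebra.
Set Implicit Arguments. Unset Strict Implicit. Unset Printing Implicit Defensive.
Import Order.TTheory GRing.Theory Num.Theory.
Local Open Scope ring_scope.

(* A sidigraph on vertex set 'I_n: an arc relation [arc] (arc i j = there is
   an arc from v_i to v_j) and a sign [sigma i j] (only meaningful on arcs). *)

Definition loopless n (arc : rel 'I_n) : Prop := forall i, ~~ arc i i.

Definition signed n (arc : rel 'I_n) (sigma : 'I_n -> 'I_n -> int) : Prop :=
  forall i j, arc i j -> sigma i j = 1 \/ sigma i j = -1.

Definition adjmx n (arc : rel 'I_n) (sigma : 'I_n -> 'I_n -> int) : 'M[int]_n :=
  \matrix_(i, j) (if arc i j then sigma i j else 0).

Definition phiS n (arc : rel 'I_n) (sigma : 'I_n -> 'I_n -> int) : {poly int} :=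
  char_poly (adjmx arc sigma).

Definition bipartite n (arc : rel 'I_n) : Prop :=
  exists col : 'I_n -> bool, forall i j, arc i j -> col i != col j.

Definition dcycle n (arc : rel 'I_n) (s : seq 'I_n) : bool :=
  [&& s != [::], uniq s & cycle arc s].

Definition cycle_sign n (sigma : 'I_n -> 'I_n -> int) (s : seq 'I_n) : int :=
  \prod_(p <- zip s (rot 1 s)) sigma p.1 p.2.

Definition Delta1 n (arc : rel 'I_n) (sigma : 'I_n -> 'I_n -> int) : Prop :=
  [/\ loopless arc, signed arc sigma, bipartite arc &
      forall s, dcycle arc s ->
        ((size s %% 4 = 0)%N -> cycle_sign sigma s = -1) /\
        ((size s %% 4 = 2)%N -> cycle_sign sigma s = 1)].

Definition linear_sub n (arc : rel 'I_n) (k : nat)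
    (H : {set 'I_n} * {set 'I_n * 'I_n}) : bool :=
  let U := H.1 in let B := H.2 in
  [&& #|U| == k,
      [forall p in B, [&& arc p.1 p.2, p.1 \in U & p.2 \in U]],
      [forall u in U, #|[set p in B | p.1 == u]| == 1%N] &
      [forall u in U, #|[set p in B | p.2 == u]| == 1%N]].

Definition ck n (arc : rel 'I_n) (k : nat) : nat :=
  #|[set H | linear_sub arc k H]|.

(* Main.v *)
Require Import Defs.
From HB Require Import structures.
From mathcomp Require Import all_boot all_order all_algebra.
From mathcomp Require Import all_fingroup zify.
Set Implicit Arguments. Unset Strict Implicit. Unset Printing Implicit Defensive.
Import Order.TTheory GRing.Theory Num.Theory.
Local Open Scope ring_scope.

Section Orbits.
Variable n : nat.
Implicit Types (s : {perm 'I_n}) (x y : 'I_n).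

Lemma orbit_fixed s x : #|porbit s x| = 1%N -> s x = x.
Proof. by move=> h; have := iter_porbit s x; rewrite h. Qed.

Lemma fixed_orbit s y : s y = y -> #|porbit s y| = 1%N.
Proof.
move=> sy; apply/eqP; rewrite eqn_leq card_gt0 andbC; apply/andP; split.
  by apply/set0Pn; exists y; apply: porbit_id.
rewrite -(cards1 y); apply: subset_leq_card; apply/subsetP=> z /porbitP[i ->].
by rewrite permX_fix // set11.
Qed.

Lemma orbit_nonfix s x y : (1 < #|porbit s x|)%N -> y \in porbit s x -> s y != y.
Proof.
move=> h yx; apply/eqP=> sy.
move: yx; rewrite -eq_porbit_mem => /eqP e.
by move: h; rewrite -e fixed_orbit.
Qed.

Lemma map_traject s x m : map s (traject s x m) = traject s (s x) m.
Proof. by elim: m x => //= m IH x; rewrite IH. Qed.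

Lemma rot_traject s x : let c := traject s x #|porbit s x| in rot 1 c = map s c.
Proof.
rewrite /= map_traject; case def_m: #|porbit s x| => [|m].
  by move: (card_porbit_neq0 s x); rewrite def_m.
rewrite trajectS rot1_cons trajectSr; congr rcons.
by rewrite -iterSr -def_m iter_porbit.
Qed.

Lemma fcycle_traject s x : fcycle s (traject s x #|porbit s x|).
Proof.
case def_m: #|porbit s x| => [|m].
  by move: (card_porbit_neq0 s x); rewrite def_m.
have e : iter m s (s x) = x by rewrite -iterSr -def_m iter_porbit.
rewrite trajectS /=.
have -> : rcons (traject s (s x) m) x = traject s (s x) m.+1 by rewrite trajectSr e.
exact: fpath_traject.
Qed.

End Orbits.

Lemma mod4_odd q : ((q.*2).+1.*2 %% 4 = 2)%N.
Proof. rewrite -!muln2; lia. Qed.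
Lemma mod4_even q : ((q.*2).*2 %% 4 = 0)%N.
Proof. rewrite -!muln2; lia. Qed.

Lemma sign_mod2 a b : (a %% 2 = b %% 2)%N -> (-1) ^+ a = (-1) ^+ b :> int.
Proof.
move=> h; rewrite -signr_odd -[RHS]signr_odd; congr (_ ^+ _); move: h.
by rewrite !modn2; case: (odd a); case: (odd b).
Qed.

Lemma par1 q : (((q.*2).+1.*2.-1 + (q.*2).+1.*2) %% 2 = (q.*2).+1 %% 2)%N.
Proof. rewrite -!muln2; lia. Qed.
Lemma par2 q : (1 < q.*2.*2)%N -> (((q.*2).*2.-1 + (q.*2).*2).+1 %% 2 = (q.*2) %% 2)%N.
Proof. rewrite -!muln2; lia. Qed.

Section Sign.
Variables (n : nat) (arc : rel 'I_n) (sigma : 'I_n -> 'I_n -> int).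
Hypothesis HD : Delta1 arc sigma.
Variable s : {perm 'I_n}.
Hypothesis Hgood : forall y, s y != y -> arc y (s y).
Variable x : 'I_n.
Hypothesis Hm : (1 < #|porbit s x|)%N.

Let m := #|porbit s x|.
Let c := traject s x m.

Lemma orb_arc y : y \in porbit s x -> arc y (s y).
Proof. by move=> yx; apply: Hgood; apply: orbit_nonfix yx. Qed.

Lemma orb_even : ~~ odd m.
Proof.
have [_ _ [col Hcol] _] : Delta1 arc sigma := HD.
have H j : col (iter j s x) = col x (+) odd j.
  elim: j => [|j IH] /=; first by rewrite addbF.
  have yx : iter j s x \in porbit s x by rewrite -permX mem_porbit.
  have := Hcol _ _ (orb_arc yx); rewrite IH.
  by case: (col (s (iter j s x))); case: (col x); case: (odd j).
have := H m; rewrite /m iter_porbit.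
by case: (col x); case: (odd _).
Qed.

Lemma orb_dcycle : dcycle arc c.
Proof.
apply/and3P; split.
- by rewrite -size_eq0 size_traject; apply: card_porbit_neq0.
- exact: uniq_traject_porbit.
- apply: (@sub_in_cycle _ (mem (porbit s x)) (frel s)); last exact: fcycle_traject.
    by move=> y z yx _ /eqP <-; apply: orb_arc.
  by apply/allP => y; rewrite -porbit_traject.
Qed.

Lemma orb_cycle_sign : cycle_sign sigma c = \prod_(y in porbit s x) sigma y (s y).
Proof.
rewrite /cycle_sign rot_traject -{1}(map_id c) zip_map big_map /=.
rewrite big_uniq ?uniq_traject_porbit //; apply: eq_bigl => y.
by rewrite -porbit_traject.
Qed.

Lemma orb_sign :
  (-1) ^+ m.-1 * \prod_(i in porbit s x | s i != i) (- sigma i (s i)) = (-1) ^+ m./2 :> int.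
Proof.
rewrite (eq_bigl (mem (porbit s x))); last first.
  move=> i /=; case: (boolP (i \in porbit s x)) => //= h.
  by rewrite (orbit_nonfix Hm h).
rewrite prodrN -orb_cycle_sign.
have [_ _ _ Hc] : Delta1 arc sigma := HD.
have [H0 H2] := Hc _ orb_dcycle.
rewrite /c size_traject -/m in H0 H2.
rewrite /c; move: H0 H2 Hm; rewrite -/m.
have := even_halfK orb_even; rewrite -/m.
move: (m./2) (odd_double_half (m./2)) => h oh <- H0 H2 Hm'.
move: oh; move: (h./2) => q; case: (boolP (odd h)) => ho oh; subst h;
  rewrite ?add1n ?add0n in H0 H2 Hm' *; clear ho.
- rewrite H2 ?mod4_odd // mulr1 -exprD; exact/sign_mod2/par1.
- rewrite H0 ?mod4_even // mulrN1 mulrN -exprD -mulN1r -exprS.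
  exact/sign_mod2/par2.
Qed.

End Sign.

Lemma big_porbits n R idx (op : Monoid.com_law idx) (s : 'S_n) (Pr : pred 'I_n)
  (F : 'I_n -> R) :
  \big[op/idx]_(i | Pr i) F i =
  \big[op/idx]_(O in porbits s) \big[op/idx]_(i in O | Pr i) F i.
Proof.
rewrite (partition_big (porbit s) (mem (porbits s))) => [|i _]; last exact: imset_f.
apply: eq_bigr => O /imsetP[x _ ->]; apply: eq_bigl => i.
by rewrite eq_porbit_mem andbC.
Qed.

Lemma sum_porbits n (s : 'S_n) : (\sum_(O in porbits s) #|O| = n)%N.
Proof.
rewrite -[RHS]card_ord -sum1_card (big_porbits _ s); apply: eq_bigr => O _.
by rewrite -sum1_card; apply: eq_bigl => i; rewrite andbT.
Qed.

Lemma porbits_gt0 n (s : 'S_n) O : O \in porbits s -> (0 < #|O|)%N.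
Proof. by case/imsetP=> x _ ->; rewrite lt0n card_porbit_neq0. Qed.

Lemma sign_porbits n (s : 'S_n) :
  (-1) ^+ s = \prod_(O in porbits s) (-1) ^+ (#|O|.-1) :> int.
Proof.
have H : \prod_(O in porbits s) (-1) ^+ (#|O|.-1) * (-1) ^+ #|porbits s| = (-1) ^+ n :> int.
  rewrite -prodr_const -big_split /= -[in RHS](sum_porbits s) -prodrXr.
  apply: eq_bigr => O /porbits_gt0; case: #|O| => // k _.
  by rewrite exprS mulrC.
rewrite /odd_perm signr_addb !signr_odd card_ord -H.
rewrite -mulrA.
have -> : (-1) ^+ #|porbits s| * (-1) ^+ #|porbits s| = 1 :> int.
  by rewrite -exprD addnn -signr_odd odd_double.
by rewrite mulr1.
Qed.

Section Global.
Variables (n : nat) (arc : rel 'I_n) (sigma : 'I_n -> 'I_n -> int).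
Hypothesis HD : Delta1 arc sigma.

Definition goodp (s : 'S_n) := [forall i, (s i != i) ==> arc i (s i)].

Lemma orbit_data (s : 'S_n) O : goodp s -> O \in porbits s ->
  (-1) ^+ (#|O|.-1) * \prod_(i in O | s i != i) (- sigma i (s i)) = (-1) ^+ (#|O|./2) /\
  (\sum_(i in O | s i != i) 1 = (#|O|./2).*2)%N.
Proof.
move=> /forallP g /imsetP[x _ ->].
have Hg y : s y != y -> arc y (s y) by move=> h; move/implyP: (g y); apply.
case: (ltnP 1 #|porbit s x|) => Hm.
  split; first exact: (orb_sign HD Hg Hm).
  rewrite sum1_card (even_halfK (orb_even HD Hg Hm)); apply: eq_card => i.
  rewrite unfold_in; case: (boolP (i \in porbit s x)) => //= h.
  by rewrite (orbit_nonfix Hm h).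
have H1 : #|porbit s x| = 1%N.
  by apply/eqP; rewrite eqn_leq Hm lt0n card_porbit_neq0.
have Hx := orbit_fixed H1.
have E : forall i, i \in porbit s x -> s i == i.
  by move=> i /porbitP[k ->]; rewrite (permX_fix _ Hx) Hx.
rewrite H1 /= big1 ?mulr1 //; last by move=> i /andP[/E ->].
by split => //; rewrite big1 // => i /andP[/E ->].
Qed.

Lemma coef_good (s : 'S_n) : goodp s ->
  (-1) ^+ s * \prod_(i | s i != i) (- sigma i (s i)) =
    (-1) ^+ (#|[pred i | s i != i]|./2) :> int /\ ~~ odd #|[pred i | s i != i]|.
Proof.
move=> g.
have -> : #|[pred i | s i != i]| = (\sum_(O in porbits s) #|O|./2).*2.
  rewrite -sum1_card (big_porbits _ s) /=.
  rewrite (big_morph double doubleD double0).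
  apply: eq_bigr => O HO; rewrite -(proj2 (orbit_data g HO)).
  by apply: eq_bigl => i; rewrite !inE.
rewrite doubleK odd_double; split => //.
rewrite sign_porbits (big_porbits _ s) -big_split -prodrXr /=.
by apply: eq_bigr => O HO; rewrite (proj1 (orbit_data g HO)).
Qed.

End Global.

Section Bij.
Variables (n : nat) (arc : rel 'I_n).
Hypothesis Hloop : loopless arc.

Definition nfs (s : 'S_n) : {set 'I_n} := [set i | s i != i].
Definition phi (s : 'S_n) : {set 'I_n} * {set 'I_n * 'I_n} :=
  (nfs s, [set (i, s i) | i in nfs s]).

Lemma phi_inj : injective phi.
Proof.
move=> s1 s2 [e1 e2]; apply/permP => i.
case: (boolP (i \in nfs s1)) => h.
  have : (i, s1 i) \in [set (i, s1 i) | i in nfs s1] by apply: imset_f.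
  by rewrite e2 => /imsetP[j _ [-> ->]].
move: (h); rewrite e1 !inE !negbK => /eqP -> .
by move: h; rewrite inE negbK => /eqP ->.
Qed.

Lemma nfs_s (s : 'S_n) i : i \in nfs s -> s i \in nfs s.
Proof. by rewrite !inE; apply: contra => /eqP/perm_inj ->. Qed.

Lemma phi_lin (s : 'S_n) : goodp arc s -> linear_sub arc #|nfs s| (phi s).
Proof.
move=> /forallP g; apply/and4P; split => //=.
- apply/forallP => p; apply/implyP => /imsetP[i hi ->] /=.
  rewrite hi (nfs_s hi) !andbT; move: hi; rewrite inE; apply/implyP; exact: g.
- apply/forallP => u; apply/implyP => hu; apply/cards1P; exists (u, s u).
  apply/setP => p; rewrite !inE; apply/andP/eqP => [[/imsetP[i _ ->] /= /eqP ->] //|->].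
  by split => //; apply: imset_f.
- apply/forallP => u; apply/implyP => hu; apply/cards1P; exists ((s^-1)%g u, u).
  apply/setP => p; rewrite !inE; apply/andP/eqP => [[/imsetP[i _ ->] /= /eqP <-]|->].
    by rewrite permK.
  split => //=; rewrite -{2}(permKV s u); apply: imset_f.
  move: hu; rewrite !inE; apply: contra => /eqP e.
  by rewrite permKV in e; rewrite {1}e permKV.
Qed.

Section Surj.
Variables (k : nat) (U : {set 'I_n}) (B : {set 'I_n * 'I_n}).
Hypothesis HL : linear_sub arc k (U, B).

Let hB p : p \in B -> [&& arc p.1 p.2, p.1 \in U & p.2 \in U].
Proof. by case/and4P: HL => _ /forallP h _ _; move/implyP: (h p). Qed.
Let hout u : u \in U -> #|[set p in B | p.1 == u]| == 1%N.
Proof. by case/and4P: HL => _ _ /forallP h _; move/implyP: (h u). Qed.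
Let hin u : u \in U -> #|[set p in B | p.2 == u]| == 1%N.
Proof. by case/and4P: HL => _ _ _ /forallP h; move/implyP: (h u). Qed.
Let hk : #|U| = k.
Proof. by case/and4P: HL => /eqP. Qed.

Lemma uniq_out p q : p \in B -> q \in B -> p.1 = q.1 -> p = q.
Proof.
move=> pB qB e; have uU : p.1 \in U by case/and3P: (hB pB).
case/cards1P: (hout uU) => r hr.
have : p \in [set p0 in B | p0.1 == p.1] by rewrite inE pB eqxx.
have : q \in [set p0 in B | p0.1 == p.1] by rewrite inE qB e eqxx.
by rewrite hr !inE => /eqP -> /eqP ->.
Qed.

Lemma uniq_in p q : p \in B -> q \in B -> p.2 = q.2 -> p = q.
Proof.
move=> pB qB e; have uU : p.2 \in U by case/and3P: (hB pB).
case/cards1P: (hin uU) => r hr.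
have : p \in [set p0 in B | p0.2 == p.2] by rewrite inE pB eqxx.
have : q \in [set p0 in B | p0.2 == p.2] by rewrite inE qB e eqxx.
by rewrite hr !inE => /eqP -> /eqP ->.
Qed.

Definition fL (u : 'I_n) : 'I_n :=
  if [pick p in B | p.1 == u] is Some p then p.2 else u.

Lemma fL_in u : u \in U -> (u, fL u) \in B.
Proof.
move=> uU; rewrite /fL; case: pickP => [p /andP[pB /eqP <-]|h].
  by rewrite -surjective_pairing.
case/cards1P: (hout uU) => r hr.
have : r \in [set p in B | p.1 == u] by rewrite hr set11.
by rewrite inE h.
Qed.

Lemma fL_out u : u \notin U -> fL u = u.
Proof.
move=> uU; rewrite /fL; case: pickP => [p /andP[pB /eqP e]|//].
by case/and3P: (hB pB) => _; rewrite e (negbTE uU).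
Qed.

Lemma fL_U u : u \in U -> fL u \in U.
Proof. by move=> /fL_in /hB /and3P[]. Qed.

Lemma fL_inj : injective fL.
Proof.
move=> u v e.
case: (boolP (u \in U)) => uU; case: (boolP (v \in U)) => vU.
- by have [] := uniq_in (fL_in uU) (fL_in vU) e.
- by move: (fL_U uU); rewrite e (fL_out vU) (negbTE vU).
- by move: (fL_U vU); rewrite -e (fL_out uU) (negbTE uU).
- by rewrite -(fL_out uU) -(fL_out vU).
Qed.

Definition sL : 'S_n := perm fL_inj.

Lemma sL_nfs : nfs sL = U.
Proof.
apply/setP => u; rewrite inE permE.
case: (boolP (u \in U)) => uU; last by rewrite fL_out // eqxx.
have /hB/and3P[a _ _] := fL_in uU.
by apply/eqP => e; move: a; rewrite /= e; apply/negP/Hloop.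
Qed.

Lemma sL_good : goodp arc sL.
Proof.
apply/forallP => u; apply/implyP => h.
have : u \in nfs sL by rewrite inE.
rewrite sL_nfs => /fL_in /hB /and3P[a _ _].
by rewrite permE.
Qed.

Lemma sL_phi : phi sL = (U, B).
Proof.
rewrite /phi sL_nfs; congr pair; apply/setP => p; apply/imsetP/idP.
  by move=> [u uU ->]; rewrite permE; apply: fL_in.
move=> pB; exists p.1; first by case/and3P: (hB pB).
rewrite permE; apply: uniq_out => //; apply: fL_in.
by case/and3P: (hB pB).
Qed.

End Surj.

Lemma ck_card k :
  ck arc k = #|[set s : 'S_n | goodp arc s & #|nfs s| == k]|.
Proof.
rewrite /ck -(card_imset _ phi_inj); apply: eq_card => H; rewrite inE.
apply/idP/imsetP.
  case: H => U B HL; exists (sL HL); last by rewrite sL_phi.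
  by rewrite inE sL_good sL_nfs; case/and4P: HL.
move=> [s]; rewrite inE => /andP[g /eqP <-] ->.
exact: phi_lin.
Qed.

End Bij.

Lemma even_reindex (V : zmodType) (F : nat -> V) m :
  (forall k, odd k -> F k = 0) ->
  \sum_(k < m) F k = \sum_(j < uphalf m) F (2 * j)%N.
Proof.
move=> F0; elim: m => [|m IH]; first by rewrite !big_ord0.
rewrite big_ord_recr /= IH.
case: (boolP (odd m)) => om.
  have -> : (m./2).+1 = uphalf m by rewrite uphalf_half om.
  by rewrite F0 // addr0.
have -> : (m./2).+1 = (uphalf m).+1 by rewrite uphalf_half (negbTE om).
rewrite big_ord_recr /=; congr (_ + F _).
by rewrite uphalf_half (negbTE om) add0n mul2n even_halfK.
Qed.

Lemma sum_regroup n (P : pred 'S_n) (f : 'S_n -> nat) (G : nat -> {poly int}) :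
  (forall s, (f s <= n)%N) ->
  \sum_(s | P s) G (f s) =
  \sum_(k < n.+1) (#|[set s | P s & f s == k]|)%:R * G k.
Proof.
move=> fn.
rewrite (partition_big (fun s => (inord (f s) : 'I_n.+1)) xpredT) //=.
apply: eq_bigr => k _; rewrite mulr_natl -sumr_const.
apply: eq_big => s.
  rewrite inE; congr (_ && _); apply/eqP/eqP => e.
    by rewrite -e inordK // ltnS.
  by apply: val_inj; rewrite /= inordK // ltnS.
by move=> /andP[_ /eqP <-]; rewrite inordK // ltnS.
Qed.

Lemma char_poly_expand n (A : 'M[int]_n) (hd : forall i, A i i = 0) :
  char_poly A = \sum_(s : 'S_n) ((-1) ^+ s * \prod_(i | s i != i) (- A i (s i)))%:P
                 * 'X^#|[pred i | s i == i]|.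
Proof.
rewrite /char_poly /char_poly_mx /determinant; apply: eq_bigr => s _.
rewrite polyCM -mulrA; congr (_ * _); first by rewrite rmorph_sign.
rewrite (bigID (fun i => s i == i)) /= mulrC; congr (_ * _).
  rewrite rmorph_prod; apply: eq_bigr => i /negbTE si.
  by rewrite !mxE eq_sym si mulr0n sub0r rmorphN.
rewrite (eq_bigr (fun=> 'X)); first by rewrite prodr_const.
move=> i /eqP si.
by rewrite !mxE si eqxx mulr1n hd subr0.
Qed.

Lemma card_nfs n (s : 'S_n) : #|nfs s| = #|[pred i | s i != i]|.
Proof. by apply: eq_card => i; rewrite inE. Qed.

Lemma card_nfs0 n (arc : rel 'I_n) :
  #|[set s : 'S_n | goodp arc s & #|nfs s| == 0%N]| = 1%N.
Proof.
apply/eqP/cards1P; exists 1%g; apply/setP => s; rewrite !inE.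
apply/idP/eqP => [/andP[_]|->].
  rewrite cards_eq0 => /eqP e; apply/permP => i; rewrite perm1.
  by apply/eqP; have := in_set0 i; rewrite -e inE => /negbFE.
rewrite cards_eq0; apply/andP; split.
  by apply/forallP => i; rewrite perm1 eqxx.
by apply/eqP/setP => i; rewrite !inE perm1 eqxx.
Qed.

Lemma term_eq (c : nat) j m :
  (c%:R * (((-1) ^+ ((2 * j)./2))%:P * 'X^m) : {poly int}) =
  ((-1) ^+ j * c%:R) *: 'X^m.
Proof.
by rewrite mul2n doubleK -mul_polyC polyCM -polyC_natr mulrA [c%:R%:P * _]mulrC.
Qed.

Unset Implicit Arguments.

Theorem theorem2p5 (n : nat) (arc : rel 'I_n) (sigma : 'I_n -> 'I_n -> int) :
  Delta1 arc sigma ->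
  phiS arc sigma =
    'X^n + \sum_(1 <= j < (n./2).+1)
             ((-1) ^+ j * (ck arc (2 * j))%:R) *: 'X^(n - 2 * j).
Proof.
move=> HD; have [Hloop _ _ _] : Delta1 arc sigma := HD.
set A := adjmx arc sigma.
have hd : forall i, A i i = 0 by move=> i; rewrite /A mxE (negbTE (Hloop i)).
rewrite /phiS (char_poly_expand hd).
rewrite (eq_bigr (fun s => if goodp arc s then
   ((-1) ^+ (#|nfs s|./2))%:P * 'X^(n - #|nfs s|) else 0)); last first.
  move=> s _; case: ifP => g.
    have Ep : \prod_(i | s i != i) (- A i (s i)) = \prod_(i | s i != i) (- sigma i (s i)).
      apply: eq_bigr => i h; rewrite /A mxE.
      by move/forallP: g => /(_ i); rewrite h /= => ->.
    rewrite Ep (proj1 (coef_good HD g)) card_nfs.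
    congr (_ * 'X^_).
    have e := cardC [pred i | s i == i]; rewrite card_ord in e.
    have e2 : #|[pred i | s i != i]| = #|[predC [pred i | s i == i]]|.
      by apply: eq_card.
    by rewrite e2 -[X in (X - _)%N]e addnK.
  move/negbT/forallPn: g => [i]; rewrite negb_imply => /andP[h1 h2].
  rewrite (bigD1 i) //= /A mxE (negbTE h2) oppr0 mul0r mulr0.
  by rewrite mul0r.
rewrite -big_mkcond /=.
rewrite (@sum_regroup n _ (fun s : 'S_n => #|nfs s|)
  (fun k => ((-1) ^+ (k./2))%:P * 'X^(n - k))); last first.
  by move=> s; rewrite -[X in (_ <= X)%N](card_ord n) max_card.
rewrite (@even_reindex _ (fun k => (#|[set s | goodp arc s & #|nfs s| == k]|)%:R *
   (((-1) ^+ (k./2))%:P * 'X^(n - k)) : {poly int})); last first.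
  move=> k ok.
  suff -> : [set s : 'S_n | goodp arc s & #|nfs s| == k] = set0 by rewrite cards0 mul0r.
  apply/setP => s; rewrite !inE.
  apply/negP => /andP[g /eqP e].
  by move: (proj2 (coef_good HD g)); rewrite -card_nfs e ok.
rewrite /= big_ord_recl; congr (_ + _).
  by rewrite muln0 card_nfs0 /= expr0 mul1r subn0 mul1r.
rewrite big_add1 big_mkord; apply: eq_bigr => j _.
rewrite (_ : (lift ord0 j : nat) = j.+1) // ck_card.
have := term_eq #|[set s : 'S_n | goodp arc s & #|nfs s| == (2 * j.+1)%N]| j.+1 (n - 2 * j.+1).
move=> ->. 
  reflexivity.
exact: Hloop.
Qed.
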